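(* Let $\mathcal{H}=(V,\vec H,\bm{w})$ be a finite, loopless, strongly connected, weighted directed hypergraph with $|V|\ge2$. For every hyperedge $h\in\vec H$, the function $\alpha\mapsto\kappa_\alpha(h)$ is concave on $[0,1]$.
   Context: A weighted directed hypergraph $(V,\vec H,\bm{w})$ has a finite vertex set $V$, a finite set $\vec H$ of hyperedges, each an ordered pair $h=(A_h,B_h)$ of nonempty subsets of $V$ (input and output), and positive weights $w_h>0$. It is loopless if $A_h\cap B_h=\emptyset$ for all $h$. A directed path from $u$ to $v$ is a sequence of hyperedges $h_1,\dots,h_l$ with $u\in A_{h_1}$, $v\in B_{h_l}$ and $B_{h_j}\cap A_{h_{j+1}}\ne\emptyset$ for $1\le j\le l-1$; the hypergraph is strongly connected if for all distinct $u,v$ there is a directed path from $u$ to $v$. The quasi-distance is $d(u,v)=\inf_\gamma\sum_{h\in\gamma}w_h$ over directed paths from $u$ to $v$ ($u\ne v$), $d(u,u)=0$. For $h=(A_h,B_h)$, $L(h)=\min_{x\in A_h,y\in B_h}d(x,y)$. Neighborhoods: $\Gamma^{in}(v)=\{z:\exists h'\text{ with }v\in B_{h'},z\in A_{h'}\}$, $\Gamma^{out}(v)=\{z:\exists h'\text{ with }v\in A_{h'},z\in B_{h'}\}$. For $h$ with $A_h=\{x_1,\dots,x_n\}$, $B_h=\{y_1,\dots,y_m\}$ and $\alpha\in[0,1]$, define $\mu^\alpha_{A_h}=\sum_{i=1}^n\mu^\alpha_{x_i}$ where $\mu^\alpha_{x_i}(x_i)=\alpha/n$, $\mu^\alpha_{x_i}(z)=(1-\alpha)\sum_{h':x_i\in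 B_{h'},z\in A_{h'}}\frac{1}{n|A_{h'}|}\frac{w_{h'}}{\sum_{h'':x_i\in B_{h''}}w_{h''}}$ for $z\in\Gamma^{in}(x_i)$, and $0$ otherwise; and $\mu^\alpha_{B_h}=\sum_{j=1}^m\mu^\alpha_{y_j}$ where $\mu^\alpha_{y_j}(y_j)=\alpha/m$, $\mu^\alpha_{y_j}(z)=(1-\alpha)\sum_{h':y_j\in A_{h'},z\in B_{h'}}\frac{1}{m|B_{h'}|}\frac{w_{h'}}{\sum_{h'':y_j\in A_{h''}}w_{h''}}$ for $z\in\Gamma^{out}(y_j)$, and $0$ otherwise. These are probability measures on $V$. For probability measures $\mu,\nu$, $W(\mu,\nu)=\inf_\pi\sum_{u,v\in V}\pi(u,v)d(u,v)$ over couplings $\pi$ (with $\sum_v\pi(u,v)=\mu(u)$, $\sum_u\pi(u,v)=\nu(v)$). Finally $\kappa_\alpha(h)=1-\frac{W(\mu^\alpha_{A_h},\mu^\alpha_{B_h})}{L(h)}$. *)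

(* Defs.v *)
From HB Require Import structures.
From mathcomp Require Import all_boot all_order all_algebra.
From mathcomp Require Import boolp classical_sets reals.
Set Implicit Arguments. Unset Strict Implicit. Unset Printing Implicit Defensive.
Import Order.TTheory GRing.Theory Num.Theory.
Local Open Scope classical_set_scope.
Local Open Scope ring_scope.

(* a hyperedge is an ordered pair (A_h, B_h) of subsets of V *)
Notation hedge V := ({set V} * {set V})%type.

Section Hyper.
Variables (R : realType) (V : finType).

Variables (H : {set hedge V}) (w : hedge V -> R).

Definition is_dpath (u v : V) (h : hedge V) (t : seq (hedge V)) : Prop :=
  [/\ all (fun g => g \in H) (h :: t),
      u \in h.1, v \in (last h t).2 &
      path (fun g g' : hedge V => [exists z, (z \in g.2) && (z \in g'.1)]) h t].

Definition path_weight (s : seq (hedge V)) : R := \sum_(g <- s) w g.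

Definition hdist (u v : V) : R :=
  if u == v then 0
  else inf [set r | exists h t, is_dpath u v h t /\ r = path_weight (h :: t)].

Definition hloopless : Prop := forall h, h \in H -> (forall x, x \in h.1 -> x \notin h.2).

Definition hstrongly_connected : Prop :=
  forall u v : V, u != v -> exists h t, is_dpath u v h t.

Definition hedgeL (h : hedge V) : R :=
  inf [set r | exists x y, [/\ x \in h.1, y \in h.2 & r = hdist x y]].

(* mu^alpha_{x_i} for x_i in A_h, n = |A_h| *)
Definition mu_in (alpha : R) (n : nat) (x z : V) : R :=
  if z == x then alpha / n%:R
  else (1 - alpha) *
    \sum_(h' in H | (x \in h'.2) && (z \in h'.1))
      (1 / (n%:R * #|h'.1|%:R)) *
      (w h' / \sum_(h'' in H | x \in h''.2) w h'').

(* mu^alpha_{y_j} for y_j in B_h, m = |B_h| *)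
Definition mu_out (alpha : R) (m : nat) (y z : V) : R :=
  if z == y then alpha / m%:R
  else (1 - alpha) *
    \sum_(h' in H | (y \in h'.1) && (z \in h'.2))
      (1 / (m%:R * #|h'.2|%:R)) *
      (w h' / \sum_(h'' in H | y \in h''.1) w h'').

Definition muA (alpha : R) (h : hedge V) (z : V) : R :=
  \sum_(x in h.1) mu_in alpha #|h.1| x z.

Definition muB (alpha : R) (h : hedge V) (z : V) : R :=
  \sum_(y in h.2) mu_out alpha #|h.2| y z.

Definition is_coupling (mu nu : V -> R) (pi : V -> V -> R) : Prop :=
  [/\ forall u v, 0 <= pi u v,
      forall u, \sum_v pi u v = mu u &
      forall v, \sum_u pi u v = nu v].

Definition wasserstein (mu nu : V -> R) : R :=
  inf [set c | exists pi, is_coupling mu nu pi /\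
                 c = \sum_u \sum_v pi u v * hdist u v].

Definition kappa (alpha : R) (h : hedge V) : R :=
  1 - wasserstein (muA alpha h) (muB alpha h) / hedgeL h.

End Hyper.

Definition concave_on01 (R : realType) (f : R -> R) : Prop :=
  forall a b t : R, 0 <= a <= 1 -> 0 <= b <= 1 -> 0 <= t <= 1 ->
    t * f a + (1 - t) * f b <= f (t * a + (1 - t) * b).

(* Main.v *)
Require Import Defs.
From HB Require Import structures.
From mathcomp Require Import all_boot all_order all_algebra.
From mathcomp Require Import boolp classical_sets reals.
From mathcomp Require Import ring lra zify.
Set Implicit Arguments. Unset Strict Implicit.
Import Order.TTheory GRing.Theory Num.Theory.
Local Open Scope classical_set_scope.
Local Open Scope ring_scope.

Definition gen (R : realType) (V : finType) (H : {set hedge V}) (w : hedge V -> R)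
  (p q : hedge V -> {set V}) (alpha : R) (n : nat) (x z : V) : R :=
  if z == x then alpha / n%:R
  else (1 - alpha) *
    \sum_(h' in H | (x \in p h') && (z \in q h'))
      (1 / (n%:R * #|q h'|%:R)) *
      (w h' / \sum_(h'' in H | x \in p h'') w h'').

Lemma gen_affine (R : realType) (V : finType) (H : {set hedge V}) (w : hedge V -> R)
  (p q : hedge V -> {set V}) (a b t : R) (n : nat) (x z : V) :
  gen H w p q (t * a + (1 - t) * b) n x z =
  t * gen H w p q a n x z + (1 - t) * gen H w p q b n x z.
Proof. rewrite /gen; case: eqP => _; ring. Qed.

Lemma gen_ge0 (R : realType) (V : finType) (H : {set hedge V}) (w : hedge V -> R)
  (p q : hedge V -> {set V}) (alpha : R) (n : nat) (x z : V) :
  (forall h, h \in H -> 0 < w h) -> 0 <= alpha <= 1 -> 0 <= gen H w p q alpha n x z.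
Proof.
move=> wpos /andP[a0 a1]; rewrite /gen; case: eqP => _.
  by apply: divr_ge0.
apply: mulr_ge0; first lra.
apply: sumr_ge0 => h /andP[hH _]; apply: mulr_ge0.
  by apply: divr_ge0 => //; apply: mulr_ge0.
apply: divr_ge0; first exact/ltW/wpos.
by apply: sumr_ge0 => g /andP[gH _]; apply/ltW/wpos.
Qed.

Lemma gen_sum (R : realType) (V : finType) (H : {set hedge V}) (w : hedge V -> R)
  (p q : hedge V -> {set V}) (alpha : R) (n : nat) (x : V) :
  (forall h, h \in H -> 0 < w h) ->
  (forall h, h \in H -> x \in p h -> x \notin q h) ->
  (forall h, h \in H -> q h != finset.set0) ->
  (exists h, (h \in H) && (x \in p h)) -> (0 < n)%N ->
  \sum_z gen H w p q alpha n x z = 1 / n%:R.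
Proof.
move=> wpos loop ne [h0 /andP[h0H xh0]] n0.
set S := \sum_(h'' in H | x \in p h'') w h''.
have S0 : 0 < S.
  rewrite /S (bigD1 h0) /=; last by rewrite h0H.
  apply: ltr_pwDl; first exact: wpos.
  by apply: sumr_ge0 => g /andP[/andP[gH _] _]; apply/ltW/wpos.
set f := fun h' : hedge V => (1 / (n%:R * #|q h'|%:R)) * (w h' / S).
set T := fun z => \sum_(h' in H | (x \in p h') && (z \in q h')) f h'.
have Tx : T x = 0.
  apply: big_pred0 => h'; apply/negP => /andP[hH /andP[xp xq]].
  by move: (loop _ hH xp); rewrite xq.
have E : forall z, gen H w p q alpha n x z = (z == x)%:R * (alpha / n%:R) + (1 - alpha) * T z.
  move=> z; rewrite /gen -/S; case: eqP => [->|_].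
    by rewrite Tx mulr0 addr0 mul1r.
  by rewrite /= mul0r add0r.
rewrite (eq_bigr _ (fun z _ => E z)) big_split /= -mulr_suml -mulr_sumr.
rewrite (bigD1 x) //= eqxx big1 ?addr0; last by move=> z /negPf ->.
have ST : \sum_z T z = 1 / n%:R.
  rewrite /T.
  have K : forall z, \sum_(h' in H | (x \in p h') && (z \in q h')) f h' =
     \sum_(h' in H | x \in p h') (if z \in q h' then f h' else 0).
    move=> z; rewrite -big_mkcondr; apply: eq_bigl => h'; by rewrite andbA.
  under eq_bigr => z _ do rewrite K.
  rewrite exchange_big /=.
  under eq_bigr => h' _ do rewrite -big_mkcond /= sumr_const.
  have -> : \sum_(i in H | x \in p i) f i *+ #|[pred z | z \in q i]|
          = \sum_(i in H | x \in p i) (w i / S) / n%:R.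
    apply: eq_bigr => i /andP[iH _].
    have qn : (#|q i| != 0)%N by rewrite cards_eq0 ne.
    rewrite /f -mulr_natr.
    have -> : #|[pred z | z \in q i]| = #|q i| by apply: eq_card.
    field; rewrite pnatr_eq0 -lt0n n0 /= lt0r_neq0 //= pnatr_eq0 //.
  rewrite -mulr_suml -mulr_suml -/S divff ?mul1r //; exact: lt0r_neq0.
rewrite ST /= mul1r; ring.
Qed.

Lemma inf_ge0 (R : realType) (E : set R) : (forall x, E x -> 0 <= x) -> 0 <= inf E.
Proof.
move=> E0; have [hi|nhi] := pselect (has_inf E).
  by apply: lb_le_inf; [case: hi|].
by rewrite inf_out.
Qed.

Lemma hdist_ge0 (R : realType) (V : finType) (H : {set hedge V}) (w : hedge V -> R) :
  (forall h, h \in H -> 0 < w h) -> forall u v, 0 <= hdist H w u v.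
Proof.
move=> wpos u v; rewrite /hdist; case: eqP => // _.
apply: inf_ge0 => r [h [t [[Hall _ _ _] ->]]].
rewrite /path_weight big_seq; apply: sumr_ge0 => g gin.
by apply/ltW/wpos; move/allP: Hall; apply.
Qed.

Lemma wass_convex (R : realType) (V : finType) (H : {set hedge V}) (w : hedge V -> R)
  (mu1 nu1 mu2 nu2 : V -> R) (t : R) :
  (forall u v, 0 <= hdist H w u v) -> 0 <= t <= 1 ->
  (exists pi, is_coupling mu1 nu1 pi) -> (exists pi, is_coupling mu2 nu2 pi) ->
  wasserstein H w (fun z => t * mu1 z + (1 - t) * mu2 z) (fun z => t * nu1 z + (1 - t) * nu2 z)
  <= t * wasserstein H w mu1 nu1 + (1 - t) * wasserstein H w mu2 nu2.
Proof.
move=> hd /andP[t0 t1] [p1 cp1] [p2 cp2].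
have cost0 : forall mu nu c, [set c | exists pi, is_coupling mu nu pi /\
                 c = \sum_u \sum_v pi u v * hdist H w u v] c -> 0 <= c.
  move=> mu nu c [pi [[pi0 _ _] ->]].
  by apply: sumr_ge0 => u _; apply: sumr_ge0 => v _; apply: mulr_ge0.
have hinf : forall mu nu p, is_coupling mu nu p -> has_inf [set c | exists pi, is_coupling mu nu pi /\
                 c = \sum_u \sum_v pi u v * hdist H w u v].
  move=> mu nu p cp; split; first by eexists; exists p; split.
  by exists 0 => c /cost0.
apply/ler_addgt0Pr => e e0.
have [c1 [q1 [cq1 ->]] lt1] := inf_adherent e0 (hinf _ _ _ cp1).
have [c2 [q2 [cq2 ->]] lt2] := inf_adherent e0 (hinf _ _ _ cp2).
rewrite /wasserstein.
set W1 := inf _ in lt1 *; set W2 := inf _ in lt2 *.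
set C1 := (\sum_u _) in lt1; set C2 := (\sum_u _) in lt2.
have t1' : 0 <= 1 - t by lra.
apply: (@le_trans _ _ (t * C1 + (1 - t) * C2)).
  apply: (ge_inf (E := [set c | _]) ); first by exists 0 => c /cost0.
  exists (fun u v => t * q1 u v + (1 - t) * q2 u v); split.
    case: cq1 => a1 b1 c1'; case: cq2 => a2 b2 c2'; split.
    - by move=> u v; apply: addr_ge0; apply: mulr_ge0.
    - by move=> u; rewrite big_split /= -!mulr_sumr b1 b2.
    - by move=> v; rewrite big_split /= -!mulr_sumr c1' c2'.
  rewrite /C1 /C2 !mulr_sumr -big_split /=; apply: eq_bigr => u _.
  rewrite !mulr_sumr -big_split /=; apply: eq_bigr => v _; ring.
have h1 : t * C1 <= t * (W1 + e) by apply: ler_wpM2l => //; apply: ltW.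
have h2 : (1 - t) * C2 <= (1 - t) * (W2 + e) by apply: ler_wpM2l => //; apply: ltW.
have -> : t * W1 + (1 - t) * W2 + e = t * (W1 + e) + (1 - t) * (W2 + e) by ring.
by apply: lerD.
Qed.

Lemma muA_gen (R : realType) (V : finType) (H : {set hedge V}) (w : hedge V -> R) alpha h z :
  muA H w alpha h z = \sum_(x in h.1) gen H w (fun g => g.2) (fun g => g.1) alpha #|h.1| x z.
Proof. by []. Qed.

Lemma muB_gen (R : realType) (V : finType) (H : {set hedge V}) (w : hedge V -> R) alpha h z :
  muB H w alpha h z = \sum_(x in h.2) gen H w (fun g => g.1) (fun g => g.2) alpha #|h.2| x z.
Proof. by []. Qed.

Lemma M_props (R : realType) (V : finType) (H : {set hedge V}) (w : hedge V -> R)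
  (p q : hedge V -> {set V}) (A : {set V}) :
  (forall h, h \in H -> 0 < w h) ->
  (forall h x, h \in H -> x \in p h -> x \notin q h) ->
  (forall h, h \in H -> q h != finset.set0) ->
  (forall x, exists h, (h \in H) && (x \in p h)) -> A != finset.set0 ->
  forall alpha, 0 <= alpha <= 1 ->
  (forall z, 0 <= \sum_(x in A) gen H w p q alpha #|A| x z) /\
  \sum_z \sum_(x in A) gen H w p q alpha #|A| x z = 1.
Proof.
move=> wpos loop ne ex An alpha ha; split.
  by move=> z; apply: sumr_ge0 => x _; apply: gen_ge0.
have n0 : (0 < #|A|)%N by rewrite card_gt0.
rewrite exchange_big /=.
rewrite (eq_bigr (fun _ => 1 / #|A|%:R)); last first.
  by move=> x _; apply: gen_sum => // h hH; apply: loop.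
rewrite sumr_const -mulr_natr; field; by rewrite pnatr_eq0 -lt0n.
Qed.

Lemma coupling_ex (R : realType) (V : finType) (mu nu : V -> R) :
  (forall z, 0 <= mu z) -> (forall z, 0 <= nu z) -> \sum_z mu z = 1 -> \sum_z nu z = 1 ->
  exists pi, is_coupling mu nu pi.
Proof.
move=> m0 n0 m1 n1; exists (fun u v => mu u * nu v); split.
- by move=> u v; apply: mulr_ge0.
- by move=> u; rewrite -mulr_sumr n1 mulr1.
- by move=> v; rewrite -mulr_suml m1 mul1r.
Qed.

Theorem mainTheorem5 (R : realType) (V : finType)
  (H : {set hedge V}) (w : hedge V -> R) :
  (forall h, h \in H -> (h.1 != finset.set0) && (h.2 != finset.set0)) ->
  (forall h, h \in H -> 0 < w h) ->
  hloopless H ->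
  hstrongly_connected H ->
  (1 < #|V|)%N ->
  forall h, h \in H -> concave_on01 (fun alpha : R => kappa H w alpha h).
Proof.
move=> ne wpos loop sc cardV h hH a b t ha hb ht.
have other : forall x : V, exists u, u != x.
  move=> x; have : (0 < #|[set~ x]%SET|)%N.
    by rewrite cardsC1; lia.
  rewrite card_gt0 => /set0Pn [u]; rewrite in_setC1 => ux; by exists u.
have exin : forall x, exists g, (g \in H) && (x \in g.2).
  move=> x; have [u ux] := other x; have [g [s [all_ _ xl _]]] := sc u x ux.
  exists (last g s); rewrite xl andbT.
  by move/allP: all_; apply; rewrite mem_last.
have exout : forall x, exists g, (g \in H) && (x \in g.1).
  move=> x; have [u ux] := other x.
  have [g [s [all_ xg _ _]]] : exists g s, is_dpath H x u g s by apply: sc; rewrite eq_sym.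
  exists g; rewrite xg andbT; by move/allP: all_; apply; rewrite mem_head.
have h1 : h.1 != finset.set0 by case/andP: (ne h hH).
have h2 : h.2 != finset.set0 by case/andP: (ne h hH).
have loopA : forall g x, g \in H -> x \in g.2 -> x \notin g.1.
  move=> g x gH x2; apply/negP => x1; by move: (loop g gH x x1); rewrite x2.
have loopB : forall g x, g \in H -> x \in g.1 -> x \notin g.2.
  by move=> g x gH; apply: loop.
have neA : forall g, g \in H -> g.1 != finset.set0 by move=> g /ne /andP[].
have neB : forall g, g \in H -> g.2 != finset.set0 by move=> g /ne /andP[].
have PA := @M_props R V H w (fun g => g.2) (fun g => g.1) h.1 wpos loopA neA exin h1.
have PB := @M_props R V H w (fun g => g.1) (fun g => g.2) h.2 wpos loopB neB exout h2.
have cpl : forall alpha, 0 <= alpha <= 1 -> exists pi, is_coupling (muA H w alpha h) (muB H w alpha h) pi.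
  move=> alpha hal; have [A0 A1] := PA alpha hal; have [B0 B1] := PB alpha hal.
  by apply: coupling_ex => [z|z||]; rewrite ?muA_gen ?muB_gen.
have affA : muA H w (t * a + (1 - t) * b) h = (fun z => t * muA H w a h z + (1 - t) * muA H w b h z).
  apply: funext => z; rewrite !muA_gen.
  under eq_bigr do rewrite gen_affine.
  by rewrite big_split /= -!mulr_sumr.
have affB : muB H w (t * a + (1 - t) * b) h = (fun z => t * muB H w a h z + (1 - t) * muB H w b h z).
  apply: funext => z; rewrite !muB_gen.
  under eq_bigr do rewrite gen_affine.
  by rewrite big_split /= -!mulr_sumr.
have Wc := @wass_convex R V H w _ _ _ _ t (hdist_ge0 wpos) ht (cpl a ha) (cpl b hb).
rewrite -affA -affB in Wc.
rewrite /kappa.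
set L := hedgeL H w h.
have L0 : 0 <= L.
  by apply: inf_ge0 => r [x [y [_ _ ->]]]; apply: hdist_ge0.
set Wa := wasserstein _ _ (muA H w a h) _ in Wc *.
set Wb := wasserstein _ _ (muA H w b h) _ in Wc *.
set Wcc := wasserstein _ _ _ _ in Wc *.
have [->|Lp] := eqVneq L 0.
  by rewrite invr0 !mulr0 !subr0 !mulr1; lra.
have Lpos : 0 < L by rewrite lt0r Lp.
have -> : t * (1 - Wa / L) + (1 - t) * (1 - Wb / L) = 1 - (t * Wa + (1 - t) * Wb) / L by ring.
rewrite lerD2l lerN2 ler_pM2r ?invr_gt0 //.
Qed.
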